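(* Let $n>0$ and let $\{p_j:j\le n\}$ be pairwise Rudin–Keisler incomparable selective ultrafilters on $\omega$. For each $j\le n$ let $\{a^j_k:k\in\omega\}\in p_j$ be a strictly increasing sequence with $a^j_k>k$ for every $k\in\omega$. Then there is a family $\{I_j:j\le n\}$ of subsets of $\omega$ such that (i) $\{a^j_k:k\in I_j\}\in p_j$ for each $j\le n$; and (ii) the intervals $[k,a^j_k]$ for $j\le n$, $k\in I_j$ are pairwise disjoint intervals of $\omega$.
   Context: A selective ultrafilter is a free ultrafilter $p$ on $\omega$ such that for every partition $\{A_n:n\in\omega\}$ of $\omega$ either some $A_n\in p$ or there is $B\in p$ with $|B\cap A_n|=1$ for every $n$. For $p,q$ free ultrafilters, $p\le_{RK}q$ if there is $f:\omega\to\omega$ with $p=\{A\subseteq\omega: f^{-1}(A)\in q\}$; $p,q$ are incomparable if neither $p\le_{RK}q$ nor $q\le_{RK}p$. $[k,a]$ denotes $\{i\in\omega:k\le i\le a\}$. *)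

(* Defs.v *)
From Stdlib Require Import Arith.

Definition subset_nat := nat -> Prop.

Definition free_ultrafilter (p : subset_nat -> Prop) : Prop :=
  p (fun _ => True) /\
  ~ p (fun _ => False) /\
  (forall A B : subset_nat, p A -> (forall x, A x -> B x) -> p B) /\
  (forall A B : subset_nat, p A -> p B -> p (fun x => A x /\ B x)) /\
  (forall A : subset_nat, p A \/ p (fun x => ~ A x)) /\
  (forall m : nat, ~ p (fun x => x = m)).

Definition is_partition (A : nat -> subset_nat) : Prop :=
  (forall n, exists x, A n x) /\
  (forall n m x, n <> m -> A n x -> A m x -> False) /\
  (forall x, exists n, A n x).

Definition selective (p : subset_nat -> Prop) : Prop :=
  free_ultrafilter p /\
  forall A : nat -> subset_nat, is_partition A ->
    (exists n, p (A n)) \/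
    (exists B : subset_nat, p B /\
       forall n, exists! x, B x /\ A n x).

Definition RK_le (p q : subset_nat -> Prop) : Prop :=
  exists f : nat -> nat, forall A : subset_nat, p A <-> q (fun x => A (f x)).

Definition RK_incomparable (p q : subset_nat -> Prop) : Prop :=
  ~ RK_le p q /\ ~ RK_le q p.

Definition interval (k a : nat) : subset_nat := fun i => k <= i <= a.

(* Main.v *)
Require Import Defs.
From Stdlib Require Import Arith.
From Stdlib Require Import Lia Classical ClassicalEpsilon.

Lemma fu_mono p : free_ultrafilter p -> forall A B : subset_nat, p A -> (forall x, A x -> B x) -> p B.
Proof. intros (H1&H2&H3&H4&H5&H6); exact H3. Qed.
Lemma fu_inter p : free_ultrafilter p -> forall A B : subset_nat, p A -> p B -> p (fun x => A x /\ B x).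
Proof. intros (H1&H2&H3&H4&H5&H6); exact H4. Qed.
Lemma fu_cases p : free_ultrafilter p -> forall A : subset_nat, p A \/ p (fun x => ~ A x).
Proof. intros (H1&H2&H3&H4&H5&H6); exact H5. Qed.
Lemma fu_full p : free_ultrafilter p -> p (fun _ => True).
Proof. intros (H1&H2&H3&H4&H5&H6); exact H1. Qed.
Lemma fu_empty p : free_ultrafilter p -> ~ p (fun _ => False).
Proof. intros (H1&H2&H3&H4&H5&H6); exact H2. Qed.
Lemma fu_free p : free_ultrafilter p -> forall m, ~ p (fun x => x = m).
Proof. intros (H1&H2&H3&H4&H5&H6); exact H6. Qed.

Lemma fu_not_both p (A : subset_nat) : free_ultrafilter p -> p A -> p (fun x => ~ A x) -> False.
Proof.
  intros Hu h1 h2. apply (fu_empty p Hu).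
  eapply fu_mono; [exact Hu| apply (fu_inter p Hu _ _ h1 h2)|]. intros x [a b]; auto.
Qed.

Lemma fu_agree p (B P Q : subset_nat) : free_ultrafilter p -> p B ->
  (forall x, B x -> P x -> Q x) -> p P -> p Q.
Proof.
  intros Hu hB H hP. eapply fu_mono; [exact Hu| apply (fu_inter p Hu _ _ hB hP)|].
  intros x [a b]; auto.
Qed.

Lemma fu_finite p N : free_ultrafilter p -> ~ p (fun x => x < N).
Proof.
  intro Hu. induction N; intro H.
  - apply (fu_empty p Hu). eapply fu_mono; [exact Hu|exact H|]. intros x hx; cbv beta in *; lia.
  - destruct (fu_cases p Hu (fun x => x < N)) as [h|h]; auto.
    apply (fu_free p Hu N). eapply fu_mono; [exact Hu| apply (fu_inter p Hu _ _ H h)|].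
    intros x [a b]; cbv beta in *; lia.
Qed.

Lemma fin_inter p (A : subset_nat) (D : nat -> subset_nat) m : free_ultrafilter p -> p A ->
  (forall j, j <= m -> p (D j)) -> p (fun x => A x /\ forall j, j <= m -> D j x).
Proof.
  intros Hu hA. induction m; intros HD.
  - eapply fu_mono; [exact Hu| apply (fu_inter p Hu _ _ hA (HD 0 (le_n 0)))|].
    intros x [a b]; split; auto. intros j hj. replace j with 0 by lia. auto.
  - assert (h := IHm (fun j hj => HD j (le_S _ _ hj))).
    eapply fu_mono; [exact Hu| apply (fu_inter p Hu _ _ h (HD (S m) (le_n _)))|].
    intros x [[a b] c]; split; auto. intros j hj.
    destruct (Nat.eq_dec j (S m)); [subst; auto| apply b; lia].
Qed.

Lemma sel_fun p (phi : nat -> nat) : selective p ->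
  (exists m, p (fun x => phi x = m)) \/
  (exists B : subset_nat, p B /\ forall x y, B x -> B y -> phi x = phi y -> x = y).
Proof.
  intros [Hu Hs].
  assert (He: exists e : bool, p (fun x => Nat.even x <> e)).
  { destruct (fu_cases p Hu (fun x => Nat.even x = true)) as [h|h].
    - exists false. eapply fu_mono; [exact Hu|exact h|]. intros x hx; rewrite hx; discriminate.
    - exists true. exact h. }
  destruct He as [e He].
  set (psi := fun x => if Bool.eqb (Nat.even x) e then Nat.div2 x else phi x).
  assert (Hpsi : forall x, Nat.even x <> e -> psi x = phi x).
  { intros x hx. unfold psi. destruct (Bool.eqb (Nat.even x) e) eqn:E; auto.
    apply Bool.eqb_prop in E; contradiction. }
  destruct (Hs (fun m x => psi x = m)) as [[m Hm]|[B [HB HBu]]].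
  - split; [|split].
    + intro m. destruct e.
      * exists (2*m). unfold psi. assert (Nat.even (2*m) = true) as E by (rewrite Nat.even_mul; reflexivity).
        rewrite E. simpl. apply Nat.div2_double.
      * exists (S (2*m)). unfold psi. assert (Nat.even (S (2*m)) = false) as E
          by (rewrite Nat.even_succ; unfold Nat.odd; rewrite Nat.even_mul; reflexivity).
        rewrite E. simpl. apply Nat.div2_succ_double.
    + intros n0 m0 x hne h1 h2. apply hne; congruence.
    + intro x; exists (psi x); reflexivity.
  - left. exists m. eapply fu_mono; [exact Hu| apply (fu_inter p Hu _ _ Hm He) |].
    intros x [h1 h2]. rewrite <- Hpsi; auto.
  - right. exists (fun x => B x /\ Nat.even x <> e). split.
    + apply (fu_inter p Hu _ _ HB He).
    + intros x y [bx ex] [by0 ey] hxy.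
      destruct (HBu (psi x)) as [z [[bz hz] Hz]].
      transitivity z; [symmetry|]; apply Hz; split; auto.
      rewrite !Hpsi; auto.
Qed.

Lemma eps_choice {A B : Type} (b0 : B) (R : A -> B -> Prop) :
  (forall x, exists y, R x y) -> exists f, forall x, R x (f x).
Proof. intros H. exists (fun x => epsilon (inhabits b0) (R x)). intro x. apply epsilon_spec, H. Qed.

Fixpoint sumA (a : nat -> nat -> nat) (m t : nat) : nat :=
  match m with 0 => a 0 t | S m' => sumA a m' t + a (S m') t end.
Fixpoint bseq (a : nat -> nat -> nat) (n i : nat) : nat :=
  match i with 0 => 0 | S i' => S (bseq a n i' + sumA a n (bseq a n i')) end.
Fixpoint piF (b : nat -> nat) (y : nat) : nat :=
  match y with 0 => 0 | S y' => if b (S (piF b y')) <=? S y' then S (piF b y') else piF b y' end.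

Lemma sumA_ge a m t j : j <= m -> a j t <= sumA a m t.
Proof.
  induction m; intros h; simpl.
  - replace j with 0 by lia; lia.
  - destruct (Nat.eq_dec j (S m)); [subst; lia|]. specialize (IHm ltac:(lia)); lia.
Qed.

Lemma b_strict (b:nat->nat) (Hb: forall i, b i < b (S i)) i i' : i < i' -> b i < b i'.
Proof.
  induction i'; intros; [lia|]. destruct (Nat.eq_dec i i'); [subst; apply Hb|].
  specialize (IHi' ltac:(lia)); specialize (Hb i'); lia.
Qed.

Lemma b_mono (b:nat->nat) (Hb: forall i, b i < b (S i)) i i' : i <= i' -> b i <= b i'.
Proof. intros h. destruct (Nat.eq_dec i i'); [subst; lia|]. pose proof (b_strict b Hb i i'); lia. Qed.

Lemma pi_inv (b:nat->nat) (b0 : b 0 = 0) (Hb: forall i, b i < b (S i)) y :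
  b (piF b y) <= y < b (S (piF b y)).
Proof.
  induction y; simpl.
  - rewrite b0. specialize (Hb 0). lia.
  - pose proof (Hb (S (piF b y))).
    destruct (Nat.leb_spec (b (S (piF b y))) (S y)); lia.
Qed.

Lemma pi_mono (b:nat->nat) y y' : y <= y' -> piF b y <= piF b y'.
Proof.
  induction y'; intros h.
  - replace y with 0 by lia; lia.
  - destruct (Nat.eq_dec y (S y')); [subst; lia|].
    specialize (IHy' ltac:(lia)). simpl.
    destruct (b (S (piF b y')) <=? S y'); lia.
Qed.

Lemma pi_lt (b:nat->nat) (b0 : b 0 = 0) (Hb: forall i, b i < b (S i)) y i :
  y < b i -> piF b y < i.
Proof.
  intros h. pose proof (pi_inv b b0 Hb y). destruct (le_lt_dec i (piF b y)); auto.
  pose proof (b_mono b Hb _ _ l). lia.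
Qed.

Lemma par_sep u v : Nat.even u = Nat.even v -> u <> v -> u + 2 <= v \/ v + 2 <= u.
Proof.
  intros E hne.
  assert (forall w, Nat.even (S w) <> Nat.even w) as H.
  { intros w. rewrite Nat.even_succ. unfold Nat.odd. destruct (Nat.even w); discriminate. }
  assert (v <> S u) by (intro; subst; apply (H u); auto).
  assert (u <> S v) by (intro; subst; apply (H v); auto).
  lia.
Qed.

Theorem mainTheorem4
  (n : nat) (p : nat -> subset_nat -> Prop) (a : nat -> nat -> nat) :
  0 < n ->
  (forall j, j <= n -> selective (p j)) ->
  (forall i j, i <= n -> j <= n -> i <> j -> RK_incomparable (p i) (p j)) ->
  (forall j, j <= n -> p j (fun x => exists k, x = a j k)) ->
  (forall j k l, j <= n -> k < l -> a j k < a j l) ->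
  (forall j k, j <= n -> k < a j k) ->
  exists I : nat -> subset_nat,
    (forall j, j <= n -> p j (fun x => exists k, I j k /\ x = a j k)) /\
    (forall j j' k k', j <= n -> j' <= n -> I j k -> I j' k' ->
       (j, k) <> (j', k') ->
       forall x, interval k (a j k) x -> interval k' (a j' k') x -> False).
Proof.
  intros Hn Hsel Hinc HR Hmono Hgt.
  assert (Hu : forall j, j <= n -> free_ultrafilter (p j)) by (intros j hj; apply (Hsel j hj)).
  set (b := bseq a n).
  assert (b0 : b 0 = 0) by reflexivity.
  assert (Hb : forall i, b i < b (S i)) by (intro i; unfold b; simpl; lia).
  set (pi := piF b).
  assert (P3 : forall j k, j <= n -> pi (a j k) <= S (pi k)).
  { intros j k hj. unfold pi. pose proof (pi_inv b b0 Hb k) as [_ h].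
    set (i := piF b k) in *.
    assert (a j k < b (S (S i))).
    { pose proof (Hmono j k (b (S i)) hj h). pose proof (sumA_ge a n (b (S i)) j hj).
      assert (b (S (S i)) = S (b (S i) + sumA a n (b (S i)))) by reflexivity. lia. }
    pose proof (pi_lt b b0 Hb _ _ H). lia. }
  assert (HC: forall j, j <= n -> exists C : subset_nat, p j C /\ (forall x, C x -> exists k, x = a j k)
     /\ (forall x x', C x -> C x' -> x <> x' -> pi x + 2 <= pi x' \/ pi x' + 2 <= pi x)).
  { intros j hj. pose proof (Hu j hj) as Huj.
    destruct (sel_fun (p j) pi (Hsel j hj)) as [[m Hm]|[B [HB Binj]]].
    - exfalso. apply (fu_finite (p j) (b (S m)) Huj). eapply fu_mono; [exact Huj|exact Hm|].
      intros x hx. pose proof (pi_inv b b0 Hb x). unfold pi in hx. rewrite hx in H. lia.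
    - destruct (fu_cases (p j) Huj (fun x => Nat.even (pi x) = true)) as [hE|hE].
      + exists (fun x => (B x /\ (exists k, x = a j k)) /\ Nat.even (pi x) = true). split; [|split].
        * apply (fu_inter _ Huj); auto. apply (fu_inter _ Huj); auto.
        * intros x [[_ h] _]; exact h.
        * intros x x' [[bx _] ex] [[bx' _] ex'] hne. apply par_sep. congruence.
          intro; apply hne; apply Binj; auto.
      + exists (fun x => (B x /\ (exists k, x = a j k)) /\ ~ Nat.even (pi x) = true). split; [|split].
        * apply (fu_inter _ Huj); auto. apply (fu_inter _ Huj); auto.
        * intros x [[_ h] _]; exact h.
        * intros x x' [[bx _] ex] [[bx' _] ex'] hne. apply par_sep.
          -- destruct (Nat.even (pi x)) eqn:E1; destruct (Nat.even (pi x')) eqn:E2; congruence.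
          -- intro; apply hne; apply Binj; auto. }
  destruct (eps_choice (fun _ => False) (fun j (C : subset_nat) => j <= n -> p j C /\ (forall x, C x -> exists k, x = a j k)
     /\ (forall x x', C x -> C x' -> x <> x' -> pi x + 2 <= pi x' \/ pi x' + 2 <= pi x))) as [C HCf].
  { intro j. destruct (le_gt_dec j n) as [h|h].
    - destruct (HC j h) as [C0 HC0]. exists C0; auto.
    - exists (fun _ => False). intro; lia. }
  assert (HV : forall j j' d, j <= n -> j' <= n -> j <> j' -> exists V : nat -> Prop,
            p j (fun x => V (pi x)) /\ p j' (fun x => ~ V (pi x + d))).
  { intros j j' d hj hj' hne. apply NNPP; intro H.
    destruct (HCf j hj) as [HCj [_ HCsep]].
    pose proof (Hu j hj) as Huj. pose proof (Hu j' hj') as Huj'.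
    set (g := fun m => epsilon (inhabits 0) (fun x => C j x /\ pi x = m)).
    assert (Hg : forall x, C j x -> g (pi x) = x).
    { intros x cx. assert (C j (g (pi x)) /\ pi (g (pi x)) = pi x) as [c1 c2].
      { apply (epsilon_spec (inhabits 0) (fun y => C j y /\ pi y = pi x)). exists x; auto. }
      destruct (Nat.eq_dec (g (pi x)) x); auto.
      destruct (HCsep _ _ c1 cx n0); lia. }
    assert (claim1 : forall V : nat -> Prop, p j (fun x => V (pi x)) -> p j' (fun x => V (pi x + d))).
    { intros V hV. destruct (fu_cases (p j') Huj' (fun x => V (pi x + d))) as [h|h]; auto.
      exfalso; apply H; exists V; auto. }
    assert (claim2 : forall V : nat -> Prop, p j' (fun x => V (pi x + d)) -> p j (fun x => V (pi x))).
    { intros V hV. destruct (fu_cases (p j) Huj (fun x => V (pi x))) as [h|h]; auto.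
      exfalso. apply (claim1 (fun m => ~ V m)) in h.
      apply (fu_not_both (p j') (fun x => V (pi x + d))); auto. }
    apply (proj1 (Hinc j j' hj hj' hne)). exists (fun x => g (pi x + d)). intro A. split; intro hA.
    - apply (claim1 (fun m => A (g m))). apply (fu_agree (p j) (C j) A); auto.
      intros x cx ax. simpl. rewrite Hg; auto.
    - apply (claim2 (fun m => A (g m))) in hA. apply (fu_agree (p j) (C j) (fun x => A (g (pi x))) A Huj HCj); auto.
      intros x cx ax. simpl in ax. rewrite Hg in ax; auto. }
  destruct (eps_choice (fun _ => False) (fun (t : nat * nat * nat) (V : nat -> Prop) =>
      fst (fst t) <= n -> snd (fst t) <= n -> fst (fst t) <> snd (fst t) ->
      p (fst (fst t)) (fun x => V (pi x)) /\ p (snd (fst t)) (fun x => ~ V (pi x + snd t)))) as [V HVf].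
  { intros [[j j'] d]. simpl. destruct (le_gt_dec j n) as [h1|h1]; [|exists (fun _ => False); intros; lia].
    destruct (le_gt_dec j' n) as [h2|h2]; [|exists (fun _ => False); intros; lia].
    destruct (Nat.eq_dec j j') as [h3|h3]; [exists (fun _ => False); intros; lia|].
    destruct (HV j j' d h1 h2 h3) as [V0 HV0]. exists V0; auto. }
  set (G := fun j x => C j x /\ forall j', j' <= n -> j' <> j ->
     V (j,j',0) (pi x) /\ V (j,j',1) (pi x) /\ ~ V (j',j,0) (pi x + 0) /\ ~ V (j',j,1) (pi x + 1)).
  assert (HG : forall j, j <= n -> p j (G j)).
  { intros j hj. pose proof (Hu j hj) as Huj. unfold G.
    apply (fin_inter (p j) (C j) (fun j' x => j' <> j ->
     V (j,j',0) (pi x) /\ V (j,j',1) (pi x) /\ ~ V (j',j,0) (pi x + 0) /\ ~ V (j',j,1) (pi x + 1))); auto.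
    - apply (HCf j hj).
    - intros j' hj'. destruct (Nat.eq_dec j' j) as [e|e].
      + eapply fu_mono; [exact Huj|apply (fu_full _ Huj)|]. intros x _ h; contradiction.
      + assert (ne : j <> j') by auto.
        destruct (HVf (j,j',0) hj hj' ne) as [h1 _].
        destruct (HVf (j,j',1) hj hj' ne) as [h2 _].
        destruct (HVf (j',j,0) hj' hj e) as [_ h3].
        destruct (HVf (j',j,1) hj' hj e) as [_ h4]. simpl in *.
        eapply fu_mono; [exact Huj|
          apply (fu_inter _ Huj _ _ (fu_inter _ Huj _ _ h1 h2) (fu_inter _ Huj _ _ h3 h4))|].
        intros x [[a1 a2] [a3 a4]] _. auto. }
  exists (fun j k => G j (a j k)). split.
  - intros j hj. eapply fu_mono; [exact (Hu j hj)| apply (HG j hj)|].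
    intros x hx. destruct (HCf j hj) as [_ [HRj _]]. destruct (HRj x (proj1 hx)) as [k hk].
    exists k; split; auto. subst x; auto.
  - intros j j' k k' hj hj' Ik Ik' hne y iy iy'. unfold interval in *.
    assert (sep : pi (a j k) + 2 <= pi (a j' k') \/ pi (a j' k') + 2 <= pi (a j k)).
    { destruct (Nat.eq_dec j j') as [e|e].
      - subst j'. apply (HCf j hj); [exact (proj1 Ik)|exact (proj1 Ik')|].
        intro E. assert (k <> k') by (intro; subst; apply hne; auto).
        destruct (lt_eq_lt_dec k k') as [[l|l]|l]; [|contradiction|].
        + pose proof (Hmono j _ _ hj l); lia.
        + pose proof (Hmono j _ _ hj l); lia.
      - destruct (proj2 Ik j' hj' (fun h => e (eq_sym h))) as (h1 & h2 & h3 & h4).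
        destruct (proj2 Ik' j hj e) as (h1' & h2' & h3' & h4').
        set (u := pi (a j k)) in *. set (v := pi (a j' k')) in *.
        assert (u <> v) by (intro E; apply h3'; rewrite Nat.add_0_r, <- E; exact h1).
        assert (u <> v + 1) by (intro E; apply h4'; rewrite <- E; exact h2).
        assert (v <> u + 1) by (intro E; apply h4; rewrite <- E; exact h2').
        lia. }
    pose proof (pi_mono b y (a j k) (proj2 iy)).
    pose proof (pi_mono b k y (proj1 iy)).
    pose proof (pi_mono b y (a j' k') (proj2 iy')).
    pose proof (pi_mono b k' y (proj1 iy')).
    pose proof (P3 j k hj). pose proof (P3 j' k' hj').
    unfold pi in *. lia.
Qed.
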